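(* Let $m=2^p>2$ and $r_1,\dots,r_m\in\{1,\dots,m\}$ (repetitions allowed) with $b(r_1-1)\oplus\dots\oplus b(r_m-1)=0$, and let $A$ be the $m\times m$ matrix whose $i$-th row is the $r_i$-th row of $H(m)$. Fix an index $i$ and some $r'_i\in\{1,\dots,m\}$ with $r'_i\neq r_i$, and let $B$ be obtained from $A$ by replacing its $i$-th row with the $r'_i$-th row of $H(m)$. Then the row indices of $B$ have nonzero XOR, i.e. $b(r_1-1)\oplus\dots\oplus b(r'_i-1)\oplus\dots\oplus b(r_m-1)\neq0$, and hence $\mathrm{perm}\,B=0$.
   Context: For $m=2^p$, the Sylvester matrix $H(m)$ is defined recursively by $H(1)=[1]$ and $H(2^p)=\begin{bmatrix}H(2^{p-1})&H(2^{p-1})\\ H(2^{p-1})&-H(2^{p-1})\end{bmatrix}$, rows and columns indexed $1,\dots,m$. Here $b(x)$ denotes the $p$-bit binary representation of $x\in\{0,\dots,m-1\}$ and $\oplus$ is bitwise XOR. $\mathrm{perm}\,A=\sum_{\sigma\in S_m}\prod_{i=1}^m a_{i,\sigma(i)}$. *)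

(* Defs.v *)
From HB Require Import structures.
From mathcomp Require Import all_boot all_order all_algebra all_fingroup.
Set Implicit Arguments. Unset Strict Implicit. Unset Printing Implicit Defensive.
Import GRing.Theory Num.Theory.
Local Open Scope ring_scope.

(* Entries of the Sylvester matrix H(2^p), 0-based indices, following the
   recursive block definition
     H(2^(p+1)) = [[H(2^p), H(2^p)], [H(2^p), -H(2^p)]]. *)
Fixpoint sylv (p : nat) (i j : nat) : int :=
  match p with
  | 0 => 1
  | p'.+1 =>
      let h := (2 ^ p')%N in
      if (h <= i)%N && (h <= j)%N then - sylv p' (i - h) (j - h)
      else sylv p' (i %% h) (j %% h)
  end.

Definition Hsyl (p : nat) : 'M[int]_(2 ^ p) :=
  \matrix_(i, j) sylv p i j.

Definition permanent (R : pzRingType) (n : nat) (A : 'M[R]_n) : R :=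
  \sum_(s : 'S_n) \prod_(i < n) A i (s i).

Definition bin (p x : nat) : {ffun 'I_p -> bool} :=
  [ffun k : 'I_p => odd (x %/ 2 ^ k)].

Definition xorsum (p n : nat) (v : 'I_n -> {ffun 'I_p -> bool})
  : {ffun 'I_p -> bool} :=
  [ffun k => \big[addb/false]_(i < n) v i k].

Definition bzero (p : nat) : {ffun 'I_p -> bool} := [ffun _ => false].

(* Main.v *)
Require Import Defs.
From HB Require Import structures.
From mathcomp Require Import all_boot all_order all_algebra all_fingroup.
From mathcomp Require Import zify.
Set Implicit Arguments. Unset Strict Implicit. Unset Printing Implicit Defensive.
Import GRing.Theory Num.Theory.
Local Open Scope ring_scope.

Lemma bit_mod p k i : (k < p)%N -> odd ((i %% 2^p) %/ 2^k) = odd (i %/ 2^k).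
Proof.
move=> kp; rewrite {2}(divn_eq i (2^p)).
have e : (2^p = 2^(p-k) * 2^k)%N by rewrite -expnD subnK // ltnW.
rewrite {3}e mulnA divnMDl ?expn_gt0 // oddD oddM oddX.
have -> : (p - k == 0)%N = false by apply/negbTE; rewrite subn_eq0 -ltnNge.
by rewrite andbF.
Qed.

Lemma bit_top p i : (i < 2^p.+1)%N -> odd (i %/ 2^p) = (2^p <= i)%N.
Proof.
move=> ip.
have q2 : (i %/ 2^p < 2)%N by rewrite ltn_divLR ?expn_gt0 // -expnS.
have e : (2^p <= i)%N = (1 <= i %/ 2^p)%N by rewrite leq_divRL ?expn_gt0 // mul1n.
rewrite e; move: q2; case: (i %/ 2^p)%N => [|[|]] //.
Qed.

Definition dotb p i j := \big[addb/false]_(k < p) (odd (i %/ 2^k) && odd (j %/ 2^k)).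

Lemma sylvE p i j : (i < 2^p)%N -> (j < 2^p)%N -> sylv p i j = (-1) ^+ dotb p i j.
Proof.
elim: p i j => [|p IH] i j hi hj; first by rewrite /dotb big_ord0.
have Eb : \big[addb/false]_(k < p) (odd ((i %% 2^p) %/ 2^k) && odd ((j %% 2^p) %/ 2^k))
  = \big[addb/false]_(k < p) (odd (i %/ 2^k) && odd (j %/ 2^k)).
  by apply: eq_bigr => k _; rewrite !bit_mod.
rewrite /dotb big_ord_recr [sylv _.+1 _ _]/= bit_top // bit_top //.
have hp : (0 < 2^p)%N by rewrite expn_gt0.
case: ifP => H.
  case/andP: H => H1 H2.
  have e1 : (i - 2^p = i %% 2^p)%N.
    by rewrite -{2}(subnK H1) modnDr modn_small //; move: hi; rewrite expnS; lia.
  have e2 : (j - 2^p = j %% 2^p)%N.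
    by rewrite -{2}(subnK H2) modnDr modn_small //; move: hj; rewrite expnS; lia.
  rewrite IH; last 2 first.
  - by move: hi; rewrite expnS; lia.
  - by move: hj; rewrite expnS; lia.
  by rewrite signr_addb expr1 mulrN1 /dotb e1 e2 Eb.
by rewrite [in RHS]/= addbF IH ?ltn_pmod // /dotb Eb.
Qed.

Lemma bin_inj p x y : (x < 2^p)%N -> (y < 2^p)%N -> bin p x = bin p y -> x = y.
Proof.
elim: p x y => [|p IH] x y hx hy H.
  by rewrite expn0 !ltnS !leqn0 in hx hy; rewrite (eqP hx) (eqP hy).
have Hk (k : 'I_p.+1) : odd (x %/ 2^(nat_of_ord k)) = odd (y %/ 2^k).
  by have := congr1 (fun f : {ffun 'I_p.+1 -> bool} => f k) H; rewrite !ffunE.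
have e0 : odd x = odd y by have := Hk ord0; rewrite /= expn0 !divn1.
have e1 : (x %/ 2 = y %/ 2)%N.
  apply: IH.
  - by rewrite ltn_divLR // -expnSr.
  - by rewrite ltn_divLR // -expnSr.
  apply/ffunP => k; rewrite !ffunE -!divnMA -!expnS.
  exact: (Hk (Ordinal (ltn_ord k : k.+1 < p.+1)%N)).
by rewrite (divn_eq x 2) (divn_eq y 2) e1 !modn2 e0.
Qed.

Definition dot p (u v : {ffun 'I_p -> bool}) := \big[addb/false]_(k < p) (u k && v k).
Definition xorv p (u c : {ffun 'I_p -> bool}) : {ffun 'I_p -> bool} := [ffun k => u k (+) c k].

Lemma dotbE p i j : dotb p i j = dot (bin p i) (bin p j).
Proof. by rewrite /dot /dotb; apply: eq_bigr => k _; rewrite !ffunE. Qed.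

Lemma dot_xor p (u v c : {ffun 'I_p -> bool}) : dot u (xorv v c) = dot u v (+) dot u c.
Proof. by rewrite /dot -big_split /=; apply: eq_bigr => k _; rewrite ffunE andb_addr. Qed.

Lemma dot_ind p (u : {ffun 'I_p -> bool}) k0 : dot u [ffun l => l == k0] = u k0.
Proof.
rewrite /dot (bigD1 k0) //= ffunE eqxx andbT big1 ?addbF // => l /negbTE hl.
by rewrite ffunE hl andbF.
Qed.

Lemma sgn_false : (-1) ^+ false = 1 :> int.
Proof. by []. Qed.

Theorem corollary3 (p : nat) (hm : (2 < 2 ^ p)%N)
    (r : 'I_(2 ^ p) -> 'I_(2 ^ p))
    (hr : xorsum (fun i => bin p (r i)) = bzero p)
    (i0 : 'I_(2 ^ p)) (r' : 'I_(2 ^ p)) (hne : r' != r i0) :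
  let A : 'M[int]_(2 ^ p) := \matrix_(i, j) Hsyl p (r i) j in
  let B : 'M[int]_(2 ^ p) :=
    \matrix_(i, j) (if i == i0 then Hsyl p r' j else A i j) in
  xorsum (fun i => bin p (if i == i0 then r' else r i)) != bzero p
  /\ permanent B = 0.
Proof.
move=> A B.
have part1 : xorsum (fun i => bin p (if i == i0 then r' else r i)) != bzero p.
  apply/negP => /eqP H0.
  have : bin p r' = bin p (r i0).
    apply/ffunP => k.
    have h1 := congr1 (fun f : {ffun 'I_p -> bool} => f k) H0.
    have h2 := congr1 (fun f : {ffun 'I_p -> bool} => f k) hr.
    rewrite /= !ffunE in h1 h2.
    rewrite (bigD1 i0) //= eqxx in h1; rewrite (bigD1 i0) //= in h2.
    have E : \big[addb/false]_(i | i != i0) bin p (if i == i0 then r' else r i) k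
       = \big[addb/false]_(i | i != i0) bin p (r i) k by apply: eq_bigr => i /negbTE ->.
    rewrite E in h1.
    have := congr1 (addb^~ (\big[addb/false]_(i | i != i0) bin p (r i) k)) h1.
    have := congr1 (addb^~ (\big[addb/false]_(i | i != i0) bin p (r i) k)) h2.
    by rewrite /= !addbK => ->.
  move/bin_inj => /(_ (ltn_ord _) (ltn_ord _)) /val_inj e.
  by rewrite e eqxx in hne.
split => //.
have [k0 Hk0] : exists k0, xorsum (fun i => bin p (if i == i0 then r' else r i)) k0.
  apply/existsP; apply: contraR part1 => /existsPn Hn.
  by apply/eqP/ffunP => k; rewrite [RHS]ffunE; exact/negbTE/Hn.
pose binO := fun j : 'I_(2^p) => bin p j.
have binO_inj : injective binO.
  by move=> x y /bin_inj H; apply/val_inj/H.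
have hcard : (#|{ffun 'I_p -> bool}| <= #|'I_(2^p)|)%N.
  by rewrite card_ffun card_bool !card_ord.
case: (inj_card_bij binO_inj hcard) => g gK Kg.
pose c : {ffun 'I_p -> bool} := [ffun l => l == k0].
pose T := fun j : 'I_(2^p) => g (xorv (bin p j) c).
have Tinj : injective T.
  move=> x y /(congr1 binO); rewrite /T !Kg => e; apply: binO_inj.
  apply/ffunP => k; have := congr1 (fun f : {ffun 'I_p -> bool} => f k) e.
  by rewrite /= !ffunE => /(congr1 (addb^~ (c k))); rewrite /c ffunE /= !addbK.
pose tau : 'S_(2^p) := perm Tinj.
have BE i j : B i j = (-1) ^+ dot (bin p (if i == i0 then r' else r i)) (bin p j).
  by rewrite /B /A /Hsyl !mxE; case: (i == i0); rewrite ?mxE sylvE // dotbE.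
have PE (s : 'S_(2^p)) : \prod_i B i (s i) =
    (-1) ^+ (\big[addb/false]_i dot (bin p (if i == i0 then r' else r i)) (bin p (s i))).
  rewrite (big_morph (fun b : bool => (-1) ^+ b : int) (id1 := 1) (id2 := false) (@signr_addb _) sgn_false).
  by apply: eq_bigr => i _; rewrite BE.
rewrite /permanent.
set S := (\sum_(s : {perm 'I_(2^p)}) \prod_(i < 2^p) B i (s i)).
have SN : S = - S.
  rewrite {1}/S (reindex_inj (mulIg tau)) -sumrN.
  apply: eq_bigr => s0 _; rewrite !PE.
  rewrite (eq_bigr (fun i => dot (bin p (if i == i0 then r' else r i)) (bin p (s0 i))
     (+) bin p (if i == i0 then r' else r i) k0)); last first.
    by move=> i _; rewrite permM permE /T (Kg (xorv _ c) : bin p _ = _) dot_xor dot_ind.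
  rewrite big_split /=.
  have -> : \big[addb/false]_i bin p (if i == i0 then r' else r i) k0 = true.
    by move: Hk0; rewrite ffunE.
  by rewrite signr_addb expr1 mulrN1.
by move/eqP: SN; rewrite -subr_eq0 opprK -mulr2n mulrn_eq0 => /orP [//|/eqP].
Qed.
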